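(* Let $R$ be a commutative domain with unit, let $f\in R$ be nonzero and non-invertible, and let $S=R[u,v]/(uv-f)$ (a domain). Denote by $R[u]$ and $R[v]$ the subrings of $S$ generated by $R$ and $u$, resp. by $R$ and $v$. Let $\phi\in\operatorname{Frac}(S)$ and suppose there exist $d\in\mathbb{Z}_{\ge 0}$, $g\in R[u]$ and $h\in R[v]$ such that $\phi=\frac{g}{u^d}=\frac{h}{v^d}$. Then $\phi\in S$. *)

(* Defs.v *)
From mathcomp Require Import all_boot all_algebra.
Set Implicit Arguments. Unset Strict Implicit. Unset Printing Implicit Defensive.
Import GRing.Theory.
Local Open Scope ring_scope.

(* S = R[u,v]/(uv - f) is modelled via its presentation:
   R[u,v] is {poly {poly R}}, with u the inner variable (a constant of the
   outer polynomial ring) and v the outer variable.  Elements of S are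
   classes of such polynomials modulo the principal ideal (uv - f). *)
Section S.
Variable R : idomainType.

Definition Su : {poly {poly R}} := ('X : {poly R})%:P.
Definition Sv : {poly {poly R}} := 'X.

Definition Srel (f : R) : {poly {poly R}} := Su * Sv - (f%:P)%:P.

Definition eqS (f : R) (p q : {poly {poly R}}) : Prop :=
  exists r : {poly {poly R}}, p - q = r * Srel f.

Definition inRu (g : {poly R}) : {poly {poly R}} := g%:P.
Definition inRv (h : {poly R}) : {poly {poly R}} := map_poly polyC h.
End S.

(* Main.v *)
Require Import Defs.
From mathcomp Require Import all_boot all_algebra.
From mathcomp Require Import ring zify.
Import GRing.Theory.
Local Open Scope ring_scope.

Section K.
Variable R : idomainType.
Variables (f : R) (d : nat) (g h : {poly R}) (r : {poly {poly R}}).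
Hypothesis H : inRu g * (Sv R) ^+ d - inRv h * (Su R) ^+ d = r * Srel f.
Let rr j k := (r`_j)`_k.
Let e j k := ((inRu g * (Sv R) ^+ d - inRv h * (Su R) ^+ d)`_j)`_k.

Lemma eE j k : e j k = g`_k *+ (j == d) - h`_j *+ (k == d).
Proof.
rewrite /e /inRu /inRv /Sv /Su coefB -rmorphXn coefCM coefMC coef_map /=.
by rewrite coefB coefCM coefXn coefXn !mulr_natr coefMn.
Qed.

Lemma e0 j : e j 0 = - (rr j 0 * f).
Proof.
rewrite /e H /Srel /Su /Sv mulrBr coefB coefMC mulrA coefMX.
case: j => [|j] /=; rewrite coefB ?coefMC ?coefMX /= ?coef0 ?sub0r ?coefMC //.
Qed.

Lemma eS j k : e j.+1 k.+1 = rr j k - rr j.+1 k.+1 * f.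
Proof.
rewrite /e H /Srel /Su /Sv mulrBr coefB coefMC mulrA coefMX.
by rewrite /= coefB coefMC coefMX /= coefMC.
Qed.

Lemma claim1 (f0 : f != 0) i : (i < d)%N -> forall k, (k < i)%N -> rr (k + (d - i)) k = 0.
Proof.
move=> id; elim=> [|k IH] ki.
  have := e0 (0 + (d - i)); rewrite eE.
  have -> : ((0 + (d - i) == d) = false)%N by apply/negbTE/eqP; lia.
  have -> : ((0 == d) = false)%N by apply/negbTE/eqP; lia.
  rewrite !mulr0n subr0 => /esym /eqP; rewrite oppr_eq0 mulf_eq0 (negbTE f0) orbF.
  by move/eqP.
have := eS (k + (d - i)) k; rewrite eE IH; last by lia.
have -> : (((k + (d - i)).+1 == d) = false)%N by apply/negbTE/eqP; lia.
have -> : ((k.+1 == d) = false)%N by apply/negbTE/eqP; lia.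
rewrite !mulr0n subr0 sub0r => /esym /eqP; rewrite oppr_eq0 mulf_eq0 (negbTE f0) orbF.
by rewrite -addSn => /eqP.
Qed.

Lemma claimg (f0 : f != 0) i : (i < d)%N -> g`_i = - (rr (i + (d - i)) i * f).
Proof.
move=> id; case: i id => [|i] id.
  have := e0 d; rewrite eE eqxx.
  have -> : ((0 == d) = false)%N by apply/negbTE/eqP; lia.
  by rewrite mulr0n subr0 add0n subn0.
have := eS (d.-1) i; rewrite eE.
have -> : ((d.-1.+1 == d))%N by apply/eqP; lia.
have -> : ((i.+1 == d) = false)%N by apply/negbTE/eqP; lia.
have -> : (d.-1 = i + (d - i.+1))%N by lia.
rewrite (@claim1 f0 i.+1 id i) //  mulr0n subr0 sub0r.
by have -> : ((i + (d - i.+1)).+1 = i.+1 + (d - i.+1))%N by lia.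
Qed.

Lemma claim2 (f0 : f != 0) i : (i < d)%N -> forall n k, (i <= k)%N -> (k + n = d.-1)%N ->
  rr (k + (d - i)) k = rr (d.-1 + (d - i)) d.-1 * f ^+ n.
Proof.
move=> id; elim=> [|n IH] k ik kn.
  by rewrite addn0 in kn; rewrite expr0 mulr1 -kn.
have := eS (k + (d - i)) k; rewrite eE.
have -> : (((k + (d - i)).+1 == d) = false)%N by apply/negbTE/eqP; lia.
have -> : ((k.+1 == d) = false)%N by apply/negbTE/eqP; lia.
rewrite !mulr0n subr0 => /esym /eqP; rewrite subr_eq0 => /eqP ->.
have -> : ((k + (d - i)).+1 = k.+1 + (d - i))%N by lia.
by rewrite (IH k.+1) ?exprSr ?mulrA //; lia.
Qed.

Lemma gdiv (f0 : f != 0) i : (i < d)%N -> exists c, g`_i = c * f ^+ (d - i).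
Proof.
move=> id; exists (- rr (d.-1 + (d - i)) d.-1).
rewrite (@claimg f0 i id) (@claim2 f0 i id (d.-1 - i) i) //; last by lia.
have -> : (d - i = (d.-1 - i).+1)%N by lia.
by rewrite exprSr !mulrA !mulNr.
Qed.
End K.

Theorem lemma1p8 (R : idomainType) (f : R) (d : nat) (g h : {poly R}) :
  f != 0 -> f \notin GRing.unit ->
  eqS f (inRu g * (Sv R) ^+ d) (inRv h * (Su R) ^+ d) ->
  exists s : {poly {poly R}}, eqS f (inRu g) (s * (Su R) ^+ d).
Proof.
move=> f0 _ [r Hr].
have gd := @gdiv _ _ _ _ _ _ Hr f0.
pose P (p : {poly R}) := exists s r', p%:P - s * (Su R)^+d = r' * Srel f.
suff [s [r' E]] : P g by exists s; exists r'.
rewrite -[g]coefK poly_def.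
apply: (big_ind P).
- by exists 0, 0; rewrite !mul0r subr0.
- move=> p q [s1 [r1 E1]] [s2 [r2 E2]]; exists (s1 + s2), (r1 + r2).
  by rewrite polyCD mulrDl !mulrDl -E1 -E2; ring.
move=> [i _] _ /=.
case: (ltnP i d) => id.
  have [c ->] := gd i id.
  set k := (d - i)%N.
  have dk : d = (i + k)%N by rewrite /k; lia.
  set U := Su R; set V := Sv R; set F := (f%:P)%:P : {poly {poly R}}; set C := (c%:P)%:P : {poly {poly R}}.
rewrite /P.   have -> : ((c * f ^+ k) *: 'X^i)%:P = C * F ^+ k * U ^+ i.
    by rewrite -mul_polyC /C /F /U /Su !rmorphM !rmorphXn.
  exists (C * V ^+ k).
  have := subrXX (U * V) F k.
  set Sg := \sum_(_ < _) _ => ES.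
  exists (- (C * U ^+ i * Sg)).
  have HS : Srel f = U * V - F by [].
  rewrite HS dk exprD.
  have -> : C * F ^+ k * U ^+ i - C * V ^+ k * (U ^+ i * U ^+ k) = - (C * U ^+ i * ((U * V) ^+ k - F ^+ k)).
    by rewrite exprMn; ring.
  by rewrite ES; ring.
exists ((g`_i *: 'X^(i - d))%:P), 0.
rewrite mul0r; apply/eqP; rewrite subr_eq0 /Su -rmorphXn -rmorphM; apply/eqP; congr (_%:P).
by rewrite -scalerAl -exprD subnK.
Qed.
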